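(* For every integer $n\ge 1$ and $x\in\mathbb{R}$, $$E_{-n}^k(x)=E_n^k(-x)+\frac{k}{n+k}\,E_n^k(x).$$
   Context: Fix $k\ge 0$. Partial order on $\mathbb{Z}$: $j\triangleleft n$ iff either ($|j|<|n|$ and $|n|-|j|$ is a positive even integer) or ($|j|=|n|$ and $n<j$). Let $\delta_k(x)=|2\sin x|^{2k}$ and $(f,g)_k=\frac{1}{2\pi}\int_0^{2\pi} f(x)\overline{g(x)}\delta_k(x)\,dx$. The non-symmetric Heckman–Opdam polynomials $E_n^k$, $n\in\mathbb{Z}$, are the functions on $\mathbb{R}$ of the form $E_n^k(x)=e^{nx}+\sum_{j\triangleleft n}c_{n,j}e^{jx}$ (finite sum) such that $(E_n^k(i\,\cdot),e^{ij\,\cdot})_k=0$ for all $j\triangleleft n$. It is known that $T^kE_n^k=\tilde n E_n^k$ for the Cherednik operator $T^k f(x)=f'(x)+2k\frac{f(x)-f(-x)}{1-e^{-2x}}-kf(x)$, where $\tilde n=n+k$ if $n\ge0$ and $\tilde n=n-k$ if $n<0$. *)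

(* Defs.v *)
From Stdlib Require Import Reals Lra ZArith List.
From Coquelicot Require Import Coquelicot.
Open Scope R_scope.

Definition tri (j n : Z) : Prop :=
  ((Z.abs j < Z.abs n)%Z /\ (0 < Z.abs n - Z.abs j)%Z /\ Z.Even (Z.abs n - Z.abs j))
  \/ (Z.abs j = Z.abs n /\ (n < j)%Z).

(* Window -|n| .. |n|, which contains every j with j <| n. *)
Definition zrange (n : Z) : list Z :=
  map (fun m => (Z.of_nat m - Z.abs n)%Z) (seq 0 (2 * Z.abs_nat n + 1)).

Definition cis (t : R) : C := (cos t, sin t).

(* delta_k(x) = |2 sin x|^{2k}  (with 0^0 = 1) *)
Definition delta (k x : R) : R :=
  if Req_EM_T (sin x) 0 then (if Req_EM_T k 0 then 1 else 0)
  else Rpower (Rabs (2 * sin x)) (2 * k).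

Definition hk_inner (k : R) (f g : R -> C) : C :=
  scal (/ (2 * PI))
    (RInt (V := C_R_CompleteNormedModule)
       (fun x => scal (delta k x) (Cmult (f x) (Cconj (g x)))) 0 (2 * PI)).

(* x |-> e^{nx} + sum_{j <| n} c_j e^{jx}  (only j <| n contribute, c supported there) *)
Definition expsumR (n : Z) (c : Z -> R) (x : R) : R :=
  exp (IZR n * x) + fold_right Rplus 0 (map (fun j => c j * exp (IZR j * x)) (zrange n)).

(* the same exponential polynomial evaluated at i*x *)
Definition expsumI (n : Z) (c : Z -> R) (x : R) : C :=
  Cplus (cis (IZR n * x))
    (fold_right Cplus (RtoC 0) (map (fun j => Cmult (RtoC (c j)) (cis (IZR j * x))) (zrange n))).

(* E is the non-symmetric Heckman-Opdam polynomial E_n^k *)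
Definition IsHO (k : R) (n : Z) (E : R -> R) : Prop :=
  exists c : Z -> R,
    (forall j, c j <> 0 -> tri j n) /\
    (forall x, E x = expsumR n c x) /\
    (forall j, tri j n -> hk_inner k (expsumI n c) (fun x => cis (IZR j * x)) = RtoC 0).

(* Main.v *)
Require Import Defs.
From Stdlib Require Import Reals Lra Lia ZArith List Permutation Classical.
From Coquelicot Require Import Coquelicot.
Open Scope R_scope.
Ltac zlia := Z.to_euclidean_division_equations; lia.
Ltac toR := lazymatch goal with |- ?a = ?b => change (@eq R a b) end.

Definition lsum (l : list Z) (f : Z -> R) : R :=
  fold_right (fun i acc => f i + acc) 0 l.

Lemma lsum_ext l f g : (forall i, In i l -> f i = g i) -> lsum l f = lsum l g.
Proof.
  induction l as [|a l IH]; simpl; intros H; auto.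
  rewrite H by auto. rewrite IH; auto.
Qed.

Lemma lsum_plus l f g : lsum l (fun i => f i + g i) = lsum l f + lsum l g.
Proof. induction l; simpl; [lra|]. rewrite IHl; lra. Qed.

Lemma lsum_scal l c f : lsum l (fun i => c * f i) = c * lsum l f.
Proof. induction l; simpl; [lra|]. rewrite IHl; lra. Qed.

Lemma lsum_zero l f : (forall i, In i l -> f i = 0) -> lsum l f = 0.
Proof.
  induction l as [|a l IH]; simpl; intros H; auto.
  rewrite H by auto. rewrite IH; auto. lra.
Qed.

Lemma lsum_swap l l' (f : Z -> Z -> R) :
  lsum l (fun i => lsum l' (fun j => f i j)) = lsum l' (fun j => lsum l (fun i => f i j)).
Proof.
  induction l as [|a l IH]; simpl.
  - symmetry; apply lsum_zero; auto.
  - rewrite IH. rewrite <- lsum_plus. reflexivity.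
Qed.

Lemma lsum_perm l l' f : Permutation l l' -> lsum l f = lsum l' f.
Proof. induction 1; simpl; try lra. Qed.

Lemma lsum_map l g f : lsum (map g l) f = lsum l (fun i => f (g i)).
Proof. induction l; simpl; auto. rewrite IHl; auto. Qed.

Lemma fold_map_lsum l g : fold_right Rplus 0 (map g l) = lsum l g.
Proof. induction l; simpl; auto. rewrite IHl; auto. Qed.

Definition indz (a i : Z) : R := if Z.eq_dec i a then 1 else 0.

Lemma lsum_ind l a f : NoDup l -> In a l -> lsum l (fun i => indz a i * f i) = f a.
Proof.
  induction l as [|b l IH]; simpl; intros Hn Hi; [contradiction|].
  inversion Hn; subst. unfold indz at 1. destruct (Z.eq_dec b a).
  - subst. rewrite lsum_zero. lra. intros i Hi'. unfold indz.
    destruct (Z.eq_dec i a); [subst; contradiction|lra].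
  - destruct Hi as [Hi|Hi]; [congruence|]. rewrite IH; auto. lra.
Qed.

Lemma lsum_ind_out l a f : ~ In a l -> lsum l (fun i => indz a i * f i) = 0.
Proof.
  intros H; apply lsum_zero; intros i Hi; unfold indz.
  destruct (Z.eq_dec i a); [subst; contradiction|lra].
Qed.

Lemma In_zrange n j : In j (zrange n) <-> (- Z.abs n <= j <= Z.abs n)%Z.
Proof.
  unfold zrange. rewrite in_map_iff. split.
  - intros [m [Hm Hin]]. apply in_seq in Hin. subst.
    rewrite Zabs2Nat.abs_nat_spec in Hin. lia.
  - intros H. exists (Z.to_nat (j + Z.abs n)). split.
    + rewrite Z2Nat.id; lia.
    + apply in_seq. rewrite Zabs2Nat.abs_nat_spec. lia.
Qed.

Lemma NoDup_zrange n : NoDup (zrange n).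
Proof.
  unfold zrange. apply FinFun.Injective_map_NoDup.
  - intros x y H. lia.
  - apply seq_NoDup.
Qed.

Lemma perm_opp_zrange n : Permutation (map Z.opp (zrange n)) (zrange n).
Proof.
  apply NoDup_Permutation.
  - apply FinFun.Injective_map_NoDup. intros x y H; lia. apply NoDup_zrange.
  - apply NoDup_zrange.
  - intros x. rewrite in_map_iff. split.
    + intros [y [Hy Hin]]. subst. apply In_zrange in Hin. apply In_zrange. lia.
    + intros Hin. exists (- x)%Z. split; [lia|]. apply In_zrange in Hin. apply In_zrange. lia.
Qed.

Lemma lsum_opp n f : lsum (zrange n) (fun i => f (- i)%Z) = lsum (zrange n) f.
Proof.
  rewrite <- lsum_map. apply lsum_perm, perm_opp_zrange.
Qed.

Fixpoint sgn_n (p : nat) (i : Z) : R :=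
  match p with
  | O => 0
  | S O => indz 1%Z i
  | S (S q as p') => sgn_n q i + indz (Z.of_nat q + 2)%Z i + indz (- Z.of_nat q)%Z i
  end.

Definition sig (a i : Z) : R :=
  if Z_le_dec 0 a then sgn_n (Z.to_nat a) i else - sgn_n (Z.to_nat (- a)) i.

Lemma ind_neq a i : a <> i -> indz a i = 0.
Proof. intros; unfold indz; destruct (Z.eq_dec i a); [congruence|auto]. Qed.
Lemma ind_eq a : indz a a = 1.
Proof. unfold indz; destruct (Z.eq_dec a a); [auto|congruence]. Qed.

Lemma two_step (P : nat -> Prop) : P 0%nat -> P 1%nat -> (forall p, P p -> P (S (S p))) -> forall p, P p.
Proof.
  intros H0 H1 HS p. assert (P p /\ P (S p)); [|tauto].
  induction p; [auto|]. split; [tauto|]. apply HS; tauto.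
Qed.

Lemma sgn_n_supp p i : sgn_n p i <> 0 ->
  (Z.abs i <= Z.of_nat p)%Z /\ ((Z.of_nat p - i) mod 2 = 0)%Z /\ i <> (- Z.of_nat p)%Z.
Proof.
  revert i. induction p using two_step; intros i H; simpl in H.
  - lra.
  - unfold indz in H. destruct (Z.eq_dec i 1); [subst|lra]. simpl. repeat split; try lia.
  - destruct (Req_dec (sgn_n p i) 0) as [E|E].
    + rewrite E in H. unfold indz in H.
      destruct (Z.eq_dec i (Z.of_nat p + 2)); destruct (Z.eq_dec i (- Z.of_nat p)); subst;
        try lra; rewrite !Nat2Z.inj_succ; repeat split; zlia.
    + destruct (IHp i E) as [A [B C]]. rewrite !Nat2Z.inj_succ. repeat split; zlia.
Qed.

Lemma sgn_n_diag p : (1 <= p)%nat -> sgn_n p (Z.of_nat p) = 1.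
Proof.
  induction p using two_step; intros H.
  - lia.
  - cbn. reflexivity.
  - cbn [sgn_n]. replace (Z.of_nat (S (S p))) with (Z.of_nat p + 2)%Z by lia.
    rewrite ind_eq, (ind_neq (- _)) by lia.
    destruct (Req_dec (sgn_n p (Z.of_nat p + 2)) 0) as [E|E]; [rewrite E; lra|].
    apply sgn_n_supp in E. lia.
Qed.

Lemma sig_supp a i : sig a i <> 0 ->
  (Z.abs i <= Z.abs a)%Z /\ ((a - i) mod 2 = 0)%Z /\ i <> (- Z.abs a)%Z.
Proof.
  unfold sig. destruct (Z_le_dec 0 a) as [Ha|Ha]; intros H.
  - apply sgn_n_supp in H. rewrite Z2Nat.id in H by lia. rewrite (Z.abs_eq a) by lia. auto.
  - assert (H' : sgn_n (Z.to_nat (- a)) i <> 0) by (intro E; apply H; rewrite E; lra).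
    apply sgn_n_supp in H'. rewrite Z2Nat.id in H' by lia.
    rewrite (Z.abs_neq a) by lia. destruct H' as [A [B C]]. repeat split; zlia.
Qed.

Lemma sig_opp a i : sig (- a) i = - sig a i.
Proof.
  unfold sig. destruct (Z_le_dec 0 (- a)); destruct (Z_le_dec 0 a).
  - assert (a = 0%Z) by lia. subst. simpl. lra.
  - lra.
  - rewrite Z.opp_involutive. lra.
  - lia.
Qed.

Lemma sgn_n_refl p j : sgn_n p (- j) - sgn_n p j = indz (Z.of_nat p) (- j) - indz (Z.of_nat p) j.
Proof.
  induction p using two_step; cbn [sgn_n].
  - simpl. unfold indz. destruct (Z.eq_dec (-j) 0), (Z.eq_dec j 0); try lra; lia.
  - simpl. lra.
  - replace (Z.of_nat (S (S p))) with (Z.of_nat p + 2)%Z by lia.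
    assert (E : sgn_n p (- j) + indz (Z.of_nat p + 2) (- j) + indz (- Z.of_nat p) (- j) -
      (sgn_n p j + indz (Z.of_nat p + 2) j + indz (- Z.of_nat p) j) =
      (sgn_n p (- j) - sgn_n p j) + indz (Z.of_nat p + 2) (- j) + indz (- Z.of_nat p) (- j) -
      indz (Z.of_nat p + 2) j - indz (- Z.of_nat p) j) by ring.
    rewrite E, IHp. unfold indz.
    destruct (Z.eq_dec (-j) (Z.of_nat p)), (Z.eq_dec j (Z.of_nat p)),
      (Z.eq_dec (-j) (Z.of_nat p + 2)), (Z.eq_dec j (Z.of_nat p + 2)),
      (Z.eq_dec (-j) (- Z.of_nat p)), (Z.eq_dec j (- Z.of_nat p)); try lra; lia.
Qed.

Lemma sig_refl a j : sig a (- j) - sig a j = indz (- j) a - indz j a.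
Proof.
  unfold sig. destruct (Z_le_dec 0 a).
  - rewrite sgn_n_refl. rewrite Z2Nat.id by lia. unfold indz.
    destruct (Z.eq_dec (-j) a), (Z.eq_dec j a), (Z.eq_dec a (-j)), (Z.eq_dec a j); try lra; lia.
  - assert (E : - sgn_n (Z.to_nat (- a)) (- j) - - sgn_n (Z.to_nat (- a)) j =
       - (sgn_n (Z.to_nat (- a)) (- j) - sgn_n (Z.to_nat (- a)) j)) by ring.
    rewrite E, sgn_n_refl. rewrite Z2Nat.id by lia. unfold indz.
    destruct (Z.eq_dec (-j) (-a)), (Z.eq_dec j (-a)), (Z.eq_dec a (-j)), (Z.eq_dec a j); try lra; lia.
Qed.

Fixpoint Sg (nu : Z -> R) (x : Z) (L : nat) : R :=
  match L with O => 0 | S L' => nu x + Sg nu (x - 2)%Z L' end.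

Lemma Sg_ext nu x y L : x = y -> Sg nu x L = Sg nu y L.
Proof. intros; subst; auto. Qed.

Lemma Sg_split nu L1 L2 x : Sg nu x (L1 + L2) = Sg nu x L1 + Sg nu (x - 2 * Z.of_nat L1)%Z L2.
Proof.
  revert x; induction L1; intros x.
  - simpl. rewrite (Sg_ext nu (x - 0) x) by lia. lra.
  - change (S L1 + L2)%nat with (S (L1 + L2)). cbn [Sg]. rewrite IHL1.
    rewrite (Sg_ext nu (x - 2 - 2 * Z.of_nat L1) (x - 2 * Z.of_nat (S L1))) by lia. lra.
Qed.

Lemma Sg_S nu x L : Sg nu x (S L) = nu x + Sg nu (x - 2)%Z L.
Proof. reflexivity. Qed.

Lemma Sg_last nu x L : Sg nu x (S L) = Sg nu x L + nu (x - 2 * Z.of_nat L)%Z.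
Proof.
  replace (S L) with (L + 1)%nat by lia. rewrite Sg_split. simpl. lra.
Qed.

Lemma Qn_closed n nu : (1 <= n)%Z -> forall p, (Z.of_nat p <= n)%Z -> forall j,
  lsum (zrange n) (fun i => sgn_n p i * nu (i - j)%Z) = Sg nu (Z.of_nat p - j) p.
Proof.
  intros Hn. induction p using two_step; intros Hp j.
  - simpl. apply lsum_zero. intros; lra.
  - cbn [sgn_n]. rewrite lsum_ind. simpl. lra. apply NoDup_zrange. apply In_zrange. lia.
  - cbn [sgn_n].
    rewrite (lsum_ext _ _ (fun i => sgn_n p i * nu (i - j)%Z + (indz (Z.of_nat p + 2) i * nu (i - j)%Z
       + indz (- Z.of_nat p) i * nu (i - j)%Z))) by (intros; ring).
    rewrite !lsum_plus, !lsum_ind; try apply NoDup_zrange; try (apply In_zrange; lia).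
    rewrite IHp by lia.
    rewrite Sg_S, Sg_last.
    rewrite (Sg_ext nu (Z.of_nat (S (S p)) - j - 2) (Z.of_nat p - j)) by lia.
    replace (Z.of_nat p - j - 2 * Z.of_nat p)%Z with (- Z.of_nat p - j)%Z by lia.
    replace (Z.of_nat (S (S p)) - j)%Z with (Z.of_nat p + 2 - j)%Z by lia.
    replace (Z.of_nat p + 2 - j - 2 - 2 * Z.of_nat p)%Z with (- Z.of_nat p - j)%Z by lia.
    lra.
Qed.

Definition Qf n nu a j := lsum (zrange n) (fun i => sig a i * nu (i - j)%Z).
Definition Qc nu a j := if Z_le_dec 0 a then Sg nu (a - j) (Z.to_nat a)
  else - Sg nu (- a - j)%Z (Z.to_nat (- a)).

Lemma Qf_Qc n nu a j : (1 <= n)%Z -> (Z.abs a <= n)%Z -> Qf n nu a j = Qc nu a j.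
Proof.
  intros Hn Ha. unfold Qf, Qc, sig. destruct (Z_le_dec 0 a).
  - rewrite Qn_closed by lia. rewrite Z2Nat.id by lia. auto.
  - rewrite (lsum_ext _ _ (fun i => (-1) * (sgn_n (Z.to_nat (- a)) i * nu (i - j)%Z))) by (intros; ring).
    rewrite lsum_scal, Qn_closed by lia. rewrite Z2Nat.id by lia. ring.
Qed.

Lemma nu1 nu k : 0 <= k -> (forall m, nu (- m)%Z = nu m) ->
  (forall m, (IZR m + 2 * k + 2) * nu (m + 2)%Z = (IZR m - 2 * k) * nu m) -> nu 1%Z = 0.
Proof.
  intros Hk He Hr. specialize (Hr (-1)%Z). assert (E1 : nu (-1)%Z = nu 1%Z) by (apply (He 1%Z)).
  replace (-1 + 2)%Z with 1%Z in Hr by lia.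
  rewrite E1 in Hr. replace (IZR (-1)) with (-1) in Hr by (simpl; lra).
  assert (E : (2 + 4 * k) * nu 1%Z = 0) by lra.
  apply Rmult_integral in E. destruct E; [lra|auto].
Qed.

Lemma Hlem nu k : 0 <= k -> (forall m, nu (- m)%Z = nu m) ->
  (forall m, (IZR m + 2 * k + 2) * nu (m + 2)%Z = (IZR m - 2 * k) * nu m) ->
  forall p, IZR (Z.of_nat p) * nu (Z.of_nat p) + 2 * k * Sg nu (Z.of_nat p) p = 0.
Proof.
  intros Hk He Hr. induction p using two_step.
  - simpl. lra.
  - simpl. rewrite (nu1 nu k) by auto. lra.
  - rewrite Sg_S, Sg_last.
    rewrite (Sg_ext nu (Z.of_nat (S (S p)) - 2) (Z.of_nat p)) by lia.
    replace (Z.of_nat (S (S p))) with (Z.of_nat p + 2)%Z by lia.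
    replace (Z.of_nat p + 2 - 2 - 2 * Z.of_nat p)%Z with (- Z.of_nat p)%Z by lia.
    rewrite He. rewrite plus_IZR. specialize (Hr (Z.of_nat p)). 
    replace (IZR 2) with 2 by auto. nra.
Qed.

Lemma Hz nu k : 0 <= k -> (forall m, nu (- m)%Z = nu m) ->
  (forall m, (IZR m + 2 * k + 2) * nu (m + 2)%Z = (IZR m - 2 * k) * nu m) ->
  forall m, (0 <= m)%Z -> IZR m * nu m + 2 * k * Sg nu m (Z.to_nat m) = 0.
Proof.
  intros Hk He Hr m Hm. pose proof (Hlem nu k Hk He Hr (Z.to_nat m)) as H.
  rewrite Z2Nat.id in H by lia. auto.
Qed.

Lemma case1 nu a j : (0 <= j <= a)%Z ->
  Sg nu (a - j) (Z.to_nat a) - Sg nu (j - a) (Z.to_nat j) = Sg nu (a - j) (Z.to_nat (a - j)).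
Proof.
  intros H. replace (Z.to_nat a) with (Z.to_nat (a - j) + Z.to_nat j)%nat by lia.
  rewrite Sg_split. rewrite (Sg_ext nu (a - j - 2 * Z.of_nat (Z.to_nat (a - j))) (j - a)) by lia. lra.
Qed.

Definition Dv nu k a j := (IZR a - IZR j) * nu (a - j)%Z + 2 * k * (Qc nu a j - Qc nu j a).

Lemma Dv_anti nu k a j : (forall m, nu (- m)%Z = nu m) -> Dv nu k a j = - Dv nu k j a.
Proof.
  intros He. unfold Dv. replace (j - a)%Z with (- (a - j))%Z by lia. rewrite He. ring.
Qed.

Lemma Dv_zero nu k : 0 <= k -> (forall m, nu (- m)%Z = nu m) ->
  (forall m, (IZR m + 2 * k + 2) * nu (m + 2)%Z = (IZR m - 2 * k) * nu m) ->
  forall a j, Dv nu k a j = 0.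
Proof.
  intros Hk He Hr.
  assert (C1 : forall a j, (0 <= j <= a)%Z -> Dv nu k a j = 0).
  { intros a j H. unfold Dv, Qc. destruct (Z_le_dec 0 a); [|lia]. destruct (Z_le_dec 0 j); [|lia].
    rewrite case1 by lia. rewrite <- minus_IZR. apply Hz; auto; lia. }
  assert (C3 : forall a j, (0 <= a)%Z -> (j < 0)%Z -> Dv nu k a j = 0).
  { intros a j Ha Hj. unfold Dv, Qc. destruct (Z_le_dec 0 a); [|lia]. destruct (Z_le_dec 0 j); [lia|].
    replace (Sg nu (a - j) (Z.to_nat a) - - Sg nu (- j - a) (Z.to_nat (- j)))
      with (Sg nu (a - j) (Z.to_nat (a - j))).
    rewrite <- minus_IZR. apply Hz; auto; lia.
    replace (Z.to_nat (a - j)) with (Z.to_nat a + Z.to_nat (- j))%nat by lia.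
    rewrite Sg_split. rewrite (Sg_ext nu (a - j - 2 * Z.of_nat (Z.to_nat a)) (- j - a)) by lia. lra. }
  assert (C5 : forall a j, (a <= j < 0)%Z -> Dv nu k a j = 0).
  { intros a j H. unfold Dv, Qc. destruct (Z_le_dec 0 a); [lia|]. destruct (Z_le_dec 0 j); [lia|].
    replace (- Sg nu (- a - j) (Z.to_nat (- a)) - - Sg nu (- j - a) (Z.to_nat (- j)))
      with (- Sg nu (j - a) (Z.to_nat (j - a))).
    replace (a - j)%Z with (- (j - a))%Z by lia. rewrite He.
    pose proof (Hz nu k Hk He Hr (j - a) ltac:(lia)) as HH. rewrite minus_IZR in HH. lra.
    replace (Z.to_nat (- a)) with (Z.to_nat (- j) + Z.to_nat (j - a))%nat by lia.
    rewrite Sg_split. rewrite (Sg_ext nu (- a - j - 2 * Z.of_nat (Z.to_nat (- j))) (j - a)) by lia.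
    rewrite (Sg_ext nu (- j - a) (- a - j)) by lia. lra. }
  intros a j.
  destruct (Z_le_dec 0 a), (Z_le_dec 0 j).
  - destruct (Z_le_dec j a). apply C1; lia. rewrite Dv_anti by auto. rewrite C1; lia || lra.
  - apply C3; lia.
  - rewrite Dv_anti by auto. rewrite C3; lia || lra.
  - destruct (Z_le_dec a j). apply C5; lia. rewrite Dv_anti by auto. rewrite C5; lia || lra.
Qed.

Definition lin n nu (u : Z -> R) (j : Z) := lsum (zrange n) (fun i => u i * nu (i - j)%Z).
Definition Bf n nu u v := lsum (zrange n) (fun j => v j * lin n nu u j).
Definition Tm n k (u : Z -> R) (i : Z) :=
  (IZR i - k) * u i + 2 * k * lsum (zrange n) (fun a => sig a i * u a).

Lemma lsum_scal_r l f c : lsum l f * c = lsum l (fun i => f i * c).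
Proof. rewrite Rmult_comm, <- lsum_scal. apply lsum_ext; intros; ring. Qed.

Lemma lsum_distr_l l f c : c * lsum l f = lsum l (fun i => c * f i).
Proof. rewrite lsum_scal. reflexivity. Qed.

Lemma lin_Tm n k nu u j :
  lin n nu (Tm n k u) j = lsum (zrange n) (fun a => u a * ((IZR a - k) * nu (a - j)%Z + 2 * k * Qf n nu a j)).
Proof.
  unfold lin, Tm, Qf.
  transitivity (lsum (zrange n) (fun i => (IZR i - k) * u i * nu (i - j)%Z +
     2 * k * lsum (zrange n) (fun a => sig a i * u a * nu (i - j)%Z))).
  { apply lsum_ext. intros i _. rewrite <- (lsum_scal_r _ _ (nu (i - j)%Z)). ring. }
  symmetry.
  transitivity (lsum (zrange n) (fun a => (IZR a - k) * u a * nu (a - j)%Z +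
     2 * k * lsum (zrange n) (fun i => sig a i * u a * nu (i - j)%Z))).
  { apply lsum_ext. intros a _.
    rewrite (lsum_ext _ (fun i => sig a i * u a * nu (i - j)%Z) (fun i => u a * (sig a i * nu (i - j)%Z)))
      by (intros; ring).
    rewrite <- lsum_distr_l. ring. }
  rewrite !lsum_plus, !lsum_scal. rewrite lsum_swap. reflexivity.
Qed.

Lemma Bf_Tm_r n k nu u v : (forall m, nu (- m)%Z = nu m) ->
  Bf n nu u (Tm n k v) = lsum (zrange n) (fun j => v j * lsum (zrange n)
     (fun a => u a * ((IZR j - k) * nu (a - j)%Z + 2 * k * Qf n nu j a))).
Proof.
  intros He. unfold Bf, Tm, Qf.
  transitivity (lsum (zrange n) (fun j => (IZR j - k) * v j * lin n nu u j) + 2 * k *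
    lsum (zrange n) (fun j => lsum (zrange n) (fun b => lsum (zrange n) (fun a =>
       sig b j * v b * (u a * nu (a - j)%Z))))).
  { rewrite <- lsum_scal, <- lsum_plus. apply lsum_ext. intros j _.
    rewrite Rmult_plus_distr_r. f_equal. rewrite Rmult_assoc. f_equal.
    rewrite lsum_scal_r. apply lsum_ext. intros b _. unfold lin. rewrite lsum_distr_l. reflexivity. }
  symmetry.
  transitivity (lsum (zrange n) (fun b => (IZR b - k) * v b * lin n nu u b) + 2 * k *
    lsum (zrange n) (fun b => lsum (zrange n) (fun a => lsum (zrange n) (fun j =>
       v b * u a * sig b j * nu (j - a)%Z)))).
  { rewrite <- lsum_scal, <- lsum_plus. apply lsum_ext. intros b _. unfold lin.
    rewrite lsum_distr_l, lsum_distr_l, lsum_distr_l, <- lsum_plus. apply lsum_ext. intros a _.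
    rewrite (lsum_ext _ (fun j => v b * u a * sig b j * nu (j - a)%Z) (fun j => (v b * u a) * (sig b j * nu (j - a)%Z)))
      by (intros; ring).
    rewrite lsum_scal. ring. }
  f_equal. f_equal. symmetry. rewrite lsum_swap. apply lsum_ext. intros b _. rewrite lsum_swap.
  apply lsum_ext. intros a _. apply lsum_ext. intros j _.
  replace (j - a)%Z with (- (a - j))%Z by lia. rewrite He. ring.
Qed.

Lemma Tm_sym n k nu u v : (1 <= n)%Z -> 0 <= k -> (forall m, nu (- m)%Z = nu m) ->
  (forall m, (IZR m + 2 * k + 2) * nu (m + 2)%Z = (IZR m - 2 * k) * nu m) ->
  Bf n nu (Tm n k u) v = Bf n nu u (Tm n k v).
Proof.
  intros Hn Hk He Hr. rewrite Bf_Tm_r by auto. unfold Bf. apply lsum_ext. intros j Hj.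
  rewrite lin_Tm. f_equal. apply lsum_ext. intros a Ha. f_equal.
  apply In_zrange in Hj. apply In_zrange in Ha.
  rewrite !Qf_Qc by lia. pose proof (Dv_zero nu k Hk He Hr a j) as D. unfold Dv in D.
  lra.
Qed.

Lemma Tm_refl n k u j : In j (zrange n) ->
  Tm n k (fun i => u (- i)%Z) j = - 2 * k * u j - Tm n k u (- j)%Z.
Proof.
  intros Hj. unfold Tm.
  assert (Hj' : In (- j)%Z (zrange n)) by (apply In_zrange in Hj; apply In_zrange; lia).
  assert (E1 : lsum (zrange n) (fun a => sig a j * u (- a)%Z) = - lsum (zrange n) (fun a => sig a j * u a)).
  { rewrite <- (lsum_opp n (fun a => sig a j * u (- a)%Z)).
    rewrite (lsum_ext _ _ (fun a => (-1) * (sig a j * u a))).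
    rewrite lsum_scal; ring.
    intros a _. rewrite sig_opp, Z.opp_involutive. ring. }
  assert (E2 : lsum (zrange n) (fun a => sig a (- j)%Z * u a) - lsum (zrange n) (fun a => sig a j * u a)
     = u (- j)%Z - u j).
  { rewrite <- (Rmult_1_l (lsum _ (fun a => sig a j * u a))).
    replace (1 * _) with (- ((-1) * lsum (zrange n) (fun a => sig a j * u a))) by ring.
    rewrite <- lsum_scal. unfold Rminus. rewrite Ropp_involutive.
    rewrite (lsum_ext _ (fun i => -1 * _) (fun a => - (sig a j * u a))) by (intros; ring).
    rewrite <- lsum_plus.
    rewrite (lsum_ext _ _ (fun a => indz (- j) a * u a + (-1) * (indz j a * u a))).
    2:{ intros a _. pose proof (sig_refl a j). nra. }
    rewrite lsum_plus, lsum_scal, !lsum_ind; auto using NoDup_zrange. ring. }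
  rewrite E1, opp_IZR. nra.
Qed.

Lemma Even_mod x : Z.Even x <-> (x mod 2 = 0)%Z.
Proof.
  split.
  - intros [m Hm]. subst. zlia.
  - intros H. exists (x / 2)%Z. zlia.
Qed.

Lemma tri_pos n j : (1 <= n)%Z -> (tri j n <-> (Z.abs j < n /\ (n - Z.abs j) mod 2 = 0)%Z).
Proof.
  intros Hn. unfold tri. rewrite Even_mod. rewrite (Z.abs_eq n) by lia. split.
  - intros [[A [B C]]|[A B]]; [auto|lia].
  - intros [A B]. left. repeat split; zlia.
Qed.

Lemma tri_neg n j : (1 <= n)%Z -> (tri j (- n) <-> tri j n \/ j = n).
Proof.
  intros Hn. rewrite (tri_pos n j Hn). unfold tri. rewrite Even_mod.
  rewrite Z.abs_opp, (Z.abs_eq n) by lia. split.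
  - intros [[A [B C]]|[A B]]; [left; auto|right; lia].
  - intros [[A B]|A]; [left; repeat split; zlia|right; subst; lia].
Qed.

Lemma lin_plus n nu a b u v j :
  lin n nu (fun i => a * u i + b * v i) j = a * lin n nu u j + b * lin n nu v j.
Proof.
  unfold lin. rewrite <- !lsum_scal, <- lsum_plus. apply lsum_ext; intros; ring.
Qed.

Lemma Bf_plus_u n nu a b u v w :
  Bf n nu (fun i => a * u i + b * v i) w = a * Bf n nu u w + b * Bf n nu v w.
Proof.
  unfold Bf. rewrite <- !lsum_scal, <- lsum_plus. apply lsum_ext; intros.
  rewrite lin_plus. ring.
Qed.

Lemma lin_ext n nu u u' j : (forall i, In i (zrange n) -> u i = u' i) -> lin n nu u j = lin n nu u' j.
Proof. intros H; unfold lin; apply lsum_ext; intros i Hi; rewrite H; auto. Qed.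

Lemma Bf_ext n nu u u' v v' : (forall i, In i (zrange n) -> u i = u' i) ->
  (forall i, In i (zrange n) -> v i = v' i) -> Bf n nu u v = Bf n nu u' v'.
Proof.
  intros H1 H2; unfold Bf; apply lsum_ext; intros i Hi. rewrite H2 by auto. f_equal. apply lin_ext; auto.
Qed.

Lemma Bf_ind n nu u j : In j (zrange n) -> Bf n nu u (indz j) = lin n nu u j.
Proof. intros; unfold Bf. apply lsum_ind; auto using NoDup_zrange. Qed.

Lemma Bf_supp n nu u v : (forall j, In j (zrange n) -> v j <> 0 -> lin n nu u j = 0) -> Bf n nu u v = 0.
Proof.
  intros H; unfold Bf; apply lsum_zero; intros j Hj.
  destruct (Req_dec (v j) 0) as [E|E]; [rewrite E; ring|rewrite H; auto; ring].
Qed.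

Lemma lin_sv n nu u j : (forall m, nu (- m)%Z = nu m) ->
  lin n nu (fun i => u (- i)%Z) j = lin n nu u (- j)%Z.
Proof.
  intros He. unfold lin. rewrite <- (lsum_opp n (fun i => u (- i)%Z * nu (i - j)%Z)).
  apply lsum_ext. intros i _. rewrite Z.opp_involutive. f_equal.
  replace (- i - j)%Z with (- (i - - j))%Z by lia. apply He.
Qed.

Lemma Bf_scal_v n nu u a v : Bf n nu u (fun i => a * v i) = a * Bf n nu u v.
Proof. unfold Bf. rewrite <- lsum_scal. apply lsum_ext; intros; ring. Qed.

Lemma main_alg n k nu c d :
  (1 <= n)%Z -> 0 <= k -> (forall m, nu (- m)%Z = nu m) ->
  (forall m, (IZR m + 2 * k + 2) * nu (m + 2)%Z = (IZR m - 2 * k) * nu m) ->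
  (forall u, Bf n nu u u = 0 -> forall j, In j (zrange n) -> u j = 0) ->
  (forall j, c j <> 0 -> tri j n) -> (forall j, d j <> 0 -> tri j (- n)) ->
  (forall j, tri j n -> lin n nu (fun i => indz n i + c i) j = 0) ->
  (forall j, tri j (- n) -> lin n nu (fun i => indz (- n) i + d i) j = 0) ->
  forall j, In j (zrange n) ->
  indz (- n) j + d j = (indz n (- j) + c (- j)%Z) + k / (IZR n + k) * (indz n j + c j).
Proof.
  intros Hn Hk He Hr Hpos Hc Hd Oc Od.
  set (e := fun i => indz n i + c i).
  assert (Hnk : 0 < IZR n + k) by (apply IZR_le in Hn; lra).
  assert (HnW : In n (zrange n)) by (apply In_zrange; lia).
  assert (tri_in : forall j, tri j n -> In j (zrange n)).
  { intros j H. apply tri_pos in H; auto. apply In_zrange. lia. }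
  assert (tri_ne : forall j, tri j n -> j <> n).
  { intros j H. apply tri_pos in H; auto. lia. }
  assert (tri_opp : forall j, tri (- j) n <-> tri j n).
  { intros j. rewrite !tri_pos by auto. rewrite Z.abs_opp. tauto. }
  assert (cn : c n = 0).
  { destruct (Req_dec (c n) 0); auto. exfalso. apply (tri_ne n); auto. }
  assert (sig_tri : forall a i, tri a n -> sig a i <> 0 -> tri i n).
  { intros a i Ha Hs. apply sig_supp in Hs. apply tri_pos in Ha; auto. apply tri_pos; auto. zlia. }
  assert (sig_n : forall i, sig n i <> 0 -> i <> n -> tri i n).
  { intros i Hs Hi. apply sig_supp in Hs. apply tri_pos; auto. zlia. }
  assert (sig_nn : sig n n = 1).
  { unfold sig. destruct (Z_le_dec 0 n); [|lia].
    pose proof (sgn_n_diag (Z.to_nat n) ltac:(lia)) as H. rewrite Z2Nat.id in H by lia. auto. }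
  assert (Oe : forall j, tri j n -> lin n nu e j = 0) by exact Oc.
  assert (sum_e : forall i, ~ tri i n ->
     lsum (zrange n) (fun a => sig a i * e a) = sig n i).
  { intros i Hi. unfold e.
    rewrite (lsum_ext _ _ (fun a => indz n a * sig a i + sig a i * c a)) by (intros; ring).
    rewrite lsum_plus, lsum_ind; auto using NoDup_zrange.
    rewrite lsum_zero. ring. intros a _.
    destruct (Req_dec (c a) 0) as [E|E]; [rewrite E; ring|].
    destruct (Req_dec (sig a i) 0) as [E'|E']; [rewrite E'; ring|].
    exfalso. apply Hi. apply (sig_tri a); auto. }
  assert (TmE : forall i, In i (zrange n) -> Tm n k e i = (IZR n + k) * e i).
  { set (w := fun i => 1 * Tm n k e i + (- (IZR n + k)) * e i).
    assert (Hws : forall i, In i (zrange n) -> w i <> 0 -> tri i n).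
    { intros i Hi Hne. destruct (classic (tri i n)) as [T|T]; auto. exfalso. apply Hne.
      unfold w, Tm. rewrite sum_e by auto.
      destruct (Z.eq_dec i n) as [->|Ein].
      - rewrite sig_nn. unfold e. rewrite ind_eq, cn. ring.
      - assert (E1 : e i = 0).
        { unfold e. rewrite ind_neq by auto. destruct (Req_dec (c i) 0) as [E|E]; [rewrite E; ring|].
          exfalso; apply T; auto. }
        assert (E2 : sig n i = 0).
        { destruct (Req_dec (sig n i) 0) as [E|E]; auto. exfalso; apply T; auto. }
        rewrite E1, E2. ring. }
    assert (Hwl : forall j, tri j n -> lin n nu w j = 0).
    { intros j Hj. unfold w. rewrite lin_plus. rewrite Oe by auto.
      rewrite <- Bf_ind by auto. rewrite Tm_sym by auto.
      rewrite Bf_supp. ring. intros i Hi Hne. apply Oe.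
      unfold Tm in Hne.
      rewrite (lsum_ext _ _ (fun a => indz j a * sig a i)) in Hne by (intros; ring).
      rewrite lsum_ind in Hne; auto using NoDup_zrange.
      destruct (Z.eq_dec i j) as [->|Eij]; auto.
      rewrite ind_neq in Hne by auto.
      destruct (Req_dec (sig j i) 0) as [E|E]; [rewrite E in Hne; lra|].
      apply (sig_tri j); auto. }
    assert (Hww : Bf n nu w w = 0).
    { apply Bf_supp. intros j Hj Hne. apply Hwl. apply Hws; auto. }
    intros i Hi. pose proof (Hpos w Hww i Hi) as H. unfold w in H. lra. }
  set (se := fun i => e (- i)%Z).
  assert (S1 : Bf n nu (Tm n k se) e = (IZR n + k) * Bf n nu se e).
  { rewrite Tm_sym by auto. rewrite <- Bf_scal_v. apply Bf_ext; auto. }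
  assert (S2 : Bf n nu (Tm n k se) e = (- 2 * k) * Bf n nu e e + (- (IZR n + k)) * Bf n nu se e).
  { rewrite <- Bf_plus_u. apply Bf_ext; auto. intros i Hi. unfold se. rewrite Tm_refl by auto.
    rewrite TmE. ring. apply In_zrange in Hi. apply In_zrange. lia. }
  assert (S3 : Bf n nu se e = lin n nu e (- n)%Z).
  { unfold Bf. unfold se. rewrite (lsum_ext _ _ (fun j => indz n j * lin n nu e (- j)%Z + c j * lin n nu e (- j)%Z)).
    2:{ intros j _. rewrite lin_sv by auto. unfold e at 1. ring. }
    rewrite lsum_plus, lsum_ind; auto using NoDup_zrange. rewrite lsum_zero. ring.
    intros j _. destruct (Req_dec (c j) 0) as [E|E]; [rewrite E; ring|]. rewrite Oe. ring.
    apply tri_opp. auto. }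
  assert (S4 : Bf n nu e e = lin n nu e n).
  { unfold Bf. rewrite (lsum_ext _ _ (fun j => indz n j * lin n nu e j + c j * lin n nu e j)).
    2:{ intros j _. unfold e at 1. ring. }
    rewrite lsum_plus, lsum_ind; auto using NoDup_zrange. rewrite lsum_zero. ring.
    intros j _. destruct (Req_dec (c j) 0) as [E|E]; [rewrite E; ring|]. rewrite Oe; auto. ring. }
  assert (KEY : (IZR n + k) * lin n nu e (- n)%Z + k * lin n nu e n = 0).
  { rewrite <- S3, <- S4. lra. }
  set (kap := k / (IZR n + k)).
  set (f := fun i => indz (- n) i + d i).
  set (w := fun i => 1 * f i + (-1) * (1 * se i + kap * e i)).
  assert (Hws : forall i, In i (zrange n) -> w i <> 0 -> tri i (- n)).
  { intros i Hi Hne. destruct (classic (tri i (- n))) as [T|T]; auto. exfalso. apply Hne.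
    rewrite tri_neg in T by auto.
    assert (T1 : ~ tri i n) by tauto. assert (T2 : i <> n) by tauto.
    assert (T3 : ~ tri (- i) n) by (rewrite tri_opp; auto).
    unfold w, f, se, e.
    assert (d i = 0) as -> by (destruct (Req_dec (d i) 0); auto; exfalso; apply T; apply tri_neg; auto).
    assert (c i = 0) as -> by (destruct (Req_dec (c i) 0); auto; exfalso; apply T1; auto).
    assert (c (- i)%Z = 0) as -> by (destruct (Req_dec (c (- i)%Z) 0); auto; exfalso; apply T3; auto).
    rewrite (ind_neq n i) by auto.
    unfold indz. destruct (Z.eq_dec i (- n)), (Z.eq_dec (- i) n); try lia; ring. }
  assert (Hwl : forall j, tri j (- n) -> lin n nu w j = 0).
  { intros j Hj. unfold w. rewrite lin_plus, lin_plus. unfold f. rewrite Od by auto.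
    unfold se. rewrite lin_sv by auto.
    apply tri_neg in Hj; auto. destruct Hj as [Hj| ->].
    - rewrite !Oe; auto. ring. apply tri_opp. auto.
    - unfold kap. 
      replace (1 * 0 + -1 * (1 * lin n nu e (- n)%Z + k / (IZR n + k) * lin n nu e n))
        with (- ((IZR n + k) * lin n nu e (- n)%Z + k * lin n nu e n) / (IZR n + k)) by (field; lra).
      rewrite KEY. field. lra. }
  assert (Hww : Bf n nu w w = 0).
  { apply Bf_supp. intros j Hj Hne. apply Hwl. apply Hws; auto. }
  intros j Hj. pose proof (Hpos w Hww j Hj) as H. unfold w, f, se, e in H. fold kap. lra.
Qed.

Lemma delta_k0 x : delta 0 x = 1.
Proof.
  unfold delta. destruct (Req_EM_T (sin x) 0); destruct (Req_EM_T 0 0); try lra.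
  unfold Rpower. replace (2 * 0 * ln (Rabs (2 * sin x))) with 0 by ring. apply exp_0.
Qed.

Lemma delta_form k x : 0 < k -> sin x <> 0 -> delta k x = exp (k * ln (4 * sin x ^ 2)).
Proof.
  intros Hk Hs. unfold delta. destruct (Req_EM_T (sin x) 0); [contradiction|].
  unfold Rpower. f_equal.
  assert (H : 0 < Rabs (2 * sin x)) by (apply Rabs_pos_lt; lra).
  replace (4 * sin x ^ 2) with (Rabs (2 * sin x) * Rabs (2 * sin x)).
  rewrite ln_mult by auto. ring.
  rewrite <- Rabs_mult. rewrite Rabs_pos_eq by nra. ring.
Qed.

Lemma delta_zero k x : 0 < k -> sin x = 0 -> delta k x = 0.
Proof.
  intros Hk Hs. unfold delta. destruct (Req_EM_T (sin x) 0); [|contradiction].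
  destruct (Req_EM_T k 0); [lra|auto].
Qed.

Lemma delta_nonneg k x : 0 <= delta k x.
Proof.
  unfold delta. destruct (Req_EM_T (sin x) 0). destruct (Req_EM_T k 0); lra.
  unfold Rpower. left. apply exp_pos.
Qed.

Lemma delta_pos k x : sin x <> 0 -> 0 < delta k x.
Proof.
  intros Hs. unfold delta. destruct (Req_EM_T (sin x) 0); [contradiction|].
  unfold Rpower. apply exp_pos.
Qed.

Lemma sin_nonzero_loc x : sin x <> 0 -> locally x (fun y => sin y <> 0).
Proof.
  intros Hs.
  assert (C : continuity_pt sin x) by apply continuity_sin.
  assert (Hp : 0 < Rabs (sin x)) by (apply Rabs_pos_lt; auto).
  destruct (C (Rabs (sin x)) Hp) as [a [Ha H]].
  exists (mkposreal a Ha). intros y Hy. simpl in H.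
  assert (Hy' : R_dist y x < a) by (unfold R_dist; apply Hy).
  destruct (Req_dec x y) as [->|Nxy]; auto.
  specialize (H y (conj (conj I Nxy) Hy')). unfold R_dist in H.
  intros E. rewrite E in H. rewrite Rminus_0_l, Rabs_Ropp in H. lra.
Qed.

Lemma delta_cont k x : 0 <= k -> continuous (delta k) x.
Proof.
  intros Hk. destruct (Req_dec k 0) as [->|Hk0].
  { apply (continuous_ext (fun _ => 1)). intros; rewrite delta_k0; auto. apply continuous_const. }
  assert (Hk' : 0 < k) by lra.
  destruct (Req_dec (sin x) 0) as [Hs|Hs].
  - apply continuity_pt_filterlim. intros eps Heps.
    set (eta := sqrt (exp (ln eps / k) / 4)).
    assert (Heta : 0 < eta) by (apply sqrt_lt_R0; pose proof (exp_pos (ln eps / k)); lra).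
    assert (Heta2 : eta * eta = exp (ln eps / k) / 4) by (apply sqrt_sqrt; pose proof (exp_pos (ln eps / k)); lra).
    destruct (continuity_sin x eta Heta) as [a [Ha H]].
    exists a. split; auto. intros y [_ Hy]. simpl in H |- *. unfold R_dist in *.
    rewrite (delta_zero k x) by auto. rewrite Rminus_0_r.
    destruct (Req_dec (sin y) 0) as [Hsy|Hsy].
    + rewrite delta_zero by auto. rewrite Rabs_R0; auto.
    + rewrite Rabs_pos_eq by (apply delta_nonneg). rewrite delta_form by auto.
      destruct (Req_dec x y) as [->|Nxy]; [contradiction|].
      specialize (H y (conj (conj I Nxy) Hy)). rewrite Hs, Rminus_0_r in H.
      apply Rabs_def2 in H.
      assert (Hsq : 4 * sin y ^ 2 < exp (ln eps / k)) by nra.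
      assert (Hp : 0 < 4 * sin y ^ 2) by (assert (0 < sin y ^ 2) by (apply pow2_gt_0; auto); lra).
      apply ln_increasing in Hsq; auto. rewrite ln_exp in Hsq.
      assert (Hl : k * ln (4 * sin y ^ 2) < ln eps).
      { apply Rmult_lt_compat_l with (r := k) in Hsq; auto.
        replace (k * (ln eps / k)) with (ln eps) in Hsq by (field; lra). auto. }
      apply exp_increasing in Hl. rewrite exp_ln in Hl; auto.
  - apply (continuous_ext_loc (delta k) (fun y => exp (k * ln (4 * sin y ^ 2)))).
    + generalize (sin_nonzero_loc x Hs). apply filter_imp. intros y Hy.
      rewrite delta_form; auto.
    + apply (ex_derive_continuous (K := R_AbsRing) (V := R_NormedModule) (fun y => exp (k * ln (4 * sin y ^ 2)))). auto_derive.
      assert (0 < sin x ^ 2) by (apply pow2_gt_0; auto). simpl in *; nra.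
Qed.

Lemma cont_R (f : R -> R) x : ex_derive f x -> continuous f x.
Proof. apply (ex_derive_continuous (K := R_AbsRing) (V := R_NormedModule)). Qed.

Lemma g_deriv k x : 0 <= k ->
  is_derive (fun y => sin y * delta k y) x ((2 * k + 1) * cos x * delta k x).
Proof.
  intros Hk. destruct (Req_dec k 0) as [->|Hk0].
  { apply (is_derive_ext (fun y => sin y) (fun y => sin y * delta 0 y)).
    - intros t; rewrite delta_k0. symmetry; apply Rmult_1_r.
    - rewrite delta_k0. auto_derive; auto. simpl. ring. }
  assert (Hk' : 0 < k) by lra.
  destruct (Req_dec (sin x) 0) as [Hs|Hs].
  - rewrite (delta_zero k x Hk' Hs), Rmult_0_r.
    apply is_derive_Reals. intros eps Heps.
    destruct (derivable_pt_lim_sin x 1 Rlt_0_1) as [d1 Hd1].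
    pose proof (delta_cont k x Hk) as C. apply continuity_pt_filterlim in C.
    destruct (C (eps / 2) ltac:(lra)) as [a [Ha Hc]].
    assert (Hm : 0 < Rmin d1 a) by (apply Rmin_pos; [apply cond_pos|auto]).
    exists (mkposreal _ Hm). intros h Hh Hha. simpl in Hha.
    assert (H1 : Rabs h < d1) by (eapply Rlt_le_trans; [apply Hha|apply Rmin_l]).
    assert (H2 : Rabs h < a) by (eapply Rlt_le_trans; [apply Hha|apply Rmin_r]).
    specialize (Hd1 h Hh H1).
    assert (Hxh : x <> x + h) by lra.
    assert (Hd : dist R_met (x + h) x < a) by (simpl; unfold R_dist; replace (x + h - x) with h by ring; auto).
    specialize (Hc (x + h) (conj (conj I Hxh) Hd)).
    simpl in Hc. unfold R_dist in Hc. rewrite (delta_zero k x Hk' Hs), Rminus_0_r in Hc.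
    rewrite Hs, Rmult_0_l, Rminus_0_r, Rminus_0_r.
    rewrite Hs, Rminus_0_r in Hd1.
    pose proof (COS_bound x) as Cb.
    assert (Hq : Rabs (sin (x + h) / h) < 2).
    { apply Rabs_def2 in Hd1. apply Rabs_def1; lra. }
    rewrite Rabs_pos_eq in Hc by apply delta_nonneg.
    replace (sin (x + h) * delta k (x + h) / h) with ((sin (x + h) / h) * delta k (x + h)) by (field; auto).
    rewrite Rabs_mult, (Rabs_pos_eq (delta k (x + h))) by apply delta_nonneg.
    pose proof (delta_nonneg k (x + h)). pose proof (Rabs_pos (sin (x + h) / h)). nra.
  - apply (is_derive_ext_loc (fun y => sin y * exp (k * ln (4 * sin y ^ 2)))).
    + generalize (sin_nonzero_loc x Hs). apply filter_imp. intros y Hy.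
      rewrite delta_form; auto.
    + rewrite delta_form by auto.
      assert (0 < sin x ^ 2) by (apply pow2_gt_0; auto).
      auto_derive. simpl in *; nra. simpl. field. auto.
Qed.

Lemma RInt_lin2 (f g : R -> R) a b al be : ex_RInt f a b -> ex_RInt g a b ->
  RInt (fun x => al * f x + be * g x) a b = al * RInt f a b + be * RInt g a b.
Proof.
  intros Hf Hg.
  rewrite (RInt_plus (V := R_CompleteNormedModule) (fun x => al * f x) (fun x => be * g x)).
  - rewrite (RInt_scal (V := R_CompleteNormedModule) f), (RInt_scal (V := R_CompleteNormedModule) g); auto.
  - apply (ex_RInt_scal (V := R_NormedModule) f); auto.
  - apply (ex_RInt_scal (V := R_NormedModule) g); auto.
Qed.

Lemma ex_RInt_lsum l (F : Z -> R -> R) a b : (forall i, ex_RInt (F i) a b) ->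
  ex_RInt (fun x => lsum l (fun i => F i x)) a b.
Proof.
  intros H. induction l; simpl.
  - apply (ex_RInt_const (V := R_NormedModule)).
  - apply (ex_RInt_plus (V := R_NormedModule) (F a0) (fun x => lsum l (fun i => F i x))); auto.
Qed.

Lemma RInt_lsum l (F : Z -> R -> R) a b : (forall i, ex_RInt (F i) a b) ->
  RInt (fun x => lsum l (fun i => F i x)) a b = lsum l (fun i => RInt (F i) a b).
Proof.
  intros H. induction l; simpl.
  - rewrite (RInt_const (V := R_CompleteNormedModule)). simpl. unfold scal; simpl. unfold mult; simpl. ring.
  - rewrite (RInt_plus (V := R_CompleteNormedModule) (F a0) (fun x => lsum l (fun i => F i x))); auto.
    rewrite IHl. reflexivity. apply ex_RInt_lsum; auto.
Qed.

Definition nuk k (m : Z) := RInt (fun x => delta k x * cos (IZR m * x)) 0 (2 * PI).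

Lemma cont_dtrig k (P : R -> R) x : 0 <= k -> (forall y, ex_derive P y) ->
  continuous (fun y => delta k y * P y) x.
Proof.
  intros Hk HP. apply (continuous_mult (fun y => delta k y) P).
  apply delta_cont; auto. apply cont_R; auto.
Qed.

Lemma ex_dtrig k (P : R -> R) a b : 0 <= k -> (forall y, ex_derive P y) ->
  ex_RInt (fun y => delta k y * P y) a b.
Proof.
  intros Hk HP. apply (ex_RInt_continuous (V := R_CompleteNormedModule)). intros; apply cont_dtrig; auto.
Qed.

Lemma ex_dcos k m a b : 0 <= k -> ex_RInt (fun x => delta k x * cos (IZR m * x)) a b.
Proof. intros Hk. apply (ex_dtrig k (fun x => cos (IZR m * x))); auto. intros; auto_derive; auto. Qed.

Lemma nuk_even k m : nuk k (- m)%Z = nuk k m.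
Proof.
  unfold nuk. apply RInt_ext. intros x _. rewrite opp_IZR.
  replace (- IZR m * x) with (- (IZR m * x)) by ring. rewrite cos_neg. auto.
Qed.

Definition gk k y := sin y * delta k y.

Lemma nuk_rec k m : 0 <= k ->
  (IZR m + 2 * k + 2) * nuk k (m + 2)%Z = (IZR m - 2 * k) * nuk k m.
Proof.
  intros Hk.
  set (P := fun x => (2 * k + 1) * cos (IZR (m + 1) * x) * cos x - IZR (m + 1) * sin (IZR (m + 1) * x) * sin x).
  assert (HI : is_RInt (fun x => delta k x * P x) 0 (2 * PI) 0).
  { set (F := fun x => cos (IZR (m + 1) * x) * gk k x).
    assert (E : minus (F (2 * PI)) (F 0) = 0).
    { unfold F, gk. rewrite sin_2PI, sin_0. unfold minus, plus, opp; simpl. ring. }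
    assert (HD : is_RInt (fun x => delta k x * P x) 0 (2 * PI) (minus (F (2 * PI)) (F 0))).
    2:{ rewrite E in HD. exact HD. }
    apply (is_RInt_derive (V := R_CompleteNormedModule) F).
    - intros x _. pose proof (g_deriv k x Hk) as Hg. change (is_derive (gk k) x ((2 * k + 1) * cos x * delta k x)) in Hg. unfold F.
      auto_derive. exists ((2 * k + 1) * cos x * delta k x). auto.
      replace (Derive (fun x0 : R => gk k x0) x) with ((2 * k + 1) * cos x * delta k x) by (symmetry; apply is_derive_unique; exact Hg). unfold P, gk. ring.
    - intros x _. apply cont_dtrig; auto. intros; unfold P; auto_derive; auto. }
  apply (is_RInt_unique (V := R_CompleteNormedModule)) in HI.
  rewrite (RInt_ext _ (fun x => / 2 * (IZR m + 2 * k + 2) * (delta k x * cos (IZR (m + 2) * x)) +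
     / 2 * (2 * k - IZR m) * (delta k x * cos (IZR m * x)))) in HI.
  2:{ intros x _. unfold P. rewrite !plus_IZR.
      replace (cos ((IZR m + IZR 2) * x)) with (cos ((IZR m + IZR 1) * x + x)) by (f_equal; ring).
      replace (cos (IZR m * x)) with (cos ((IZR m + IZR 1) * x - x)) by (f_equal; ring).
      rewrite cos_plus, cos_minus. simpl. field. }
  rewrite RInt_lin2 in HI by (apply ex_dcos; auto). unfold nuk. lra.
Qed.

Definition Cs (l : list Z) (u : Z -> R) x := lsum l (fun i => u i * cos (IZR i * x)).
Definition Ss (l : list Z) (u : Z -> R) x := lsum l (fun i => u i * sin (IZR i * x)).

Lemma ex_derive_lsum l (F : Z -> R -> R) : (forall i y, ex_derive (F i) y) ->
  forall y, ex_derive (fun x => lsum l (fun i => F i x)) y.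
Proof.
  intros H y. induction l; simpl.
  - apply (ex_derive_const (K := R_AbsRing) (V := R_NormedModule)).
  - apply (ex_derive_plus (K := R_AbsRing) (V := R_NormedModule) (F a) (fun x => lsum l (fun i => F i x))); auto.
Qed.

Lemma ex_derive_Cs l u y : ex_derive (Cs l u) y.
Proof. unfold Cs. apply (ex_derive_lsum l (fun i x => u i * cos (IZR i * x))). intros; auto_derive; auto. Qed.
Lemma ex_derive_Ss l u y : ex_derive (Ss l u) y.
Proof. unfold Ss. apply (ex_derive_lsum l (fun i x => u i * sin (IZR i * x))). intros; auto_derive; auto. Qed.

Lemma Bf_integral n k u : 0 <= k ->
  Bf n (nuk k) u u = RInt (fun x => delta k x * (Cs (zrange n) u x ^ 2 + Ss (zrange n) u x ^ 2)) 0 (2 * PI).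
Proof.
  intros Hk. set (W := zrange n).
  transitivity (RInt (fun x => lsum W (fun j => lsum W (fun i =>
      u j * u i * (delta k x * cos (IZR (i - j) * x))))) 0 (2 * PI)).
  - rewrite RInt_lsum.
    2:{ intros j. apply ex_RInt_lsum. intros i.
        apply (ex_RInt_scal (V := R_NormedModule) (fun x => delta k x * cos (IZR (i - j) * x)) _ _ (u j * u i)).
        apply ex_dcos; auto. }
    unfold Bf, lin, nuk. fold W. apply lsum_ext. intros j _.
    rewrite RInt_lsum.
    2:{ intros i.
        apply (ex_RInt_scal (V := R_NormedModule) (fun x => delta k x * cos (IZR (i - j) * x)) _ _ (u j * u i)).
        apply ex_dcos; auto. }
    rewrite lsum_distr_l. apply lsum_ext. intros i _.
    rewrite (RInt_scal (V := R_CompleteNormedModule) (fun x => delta k x * cos (IZR (i - j) * x)))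
      by (apply ex_dcos; auto).
    change (u j * (u i * RInt (fun x => delta k x * cos (IZR (i - j) * x)) 0 (2 * PI)) =
      (u j * u i) * RInt (fun x => delta k x * cos (IZR (i - j) * x)) 0 (2 * PI)). ring.
  - apply RInt_ext. intros x _. toR.
    unfold Cs, Ss. fold W.
    rewrite (lsum_ext _ _ (fun j => (delta k x * lsum W (fun i => u i * cos (IZR i * x))) * (u j * cos (IZR j * x)) +
       (delta k x * lsum W (fun i => u i * sin (IZR i * x))) * (u j * sin (IZR j * x)))).
    + rewrite lsum_plus, !lsum_scal. ring.
    + intros j _.
      rewrite (lsum_ext _ _ (fun i => (delta k x * u j * cos (IZR j * x)) * (u i * cos (IZR i * x)) +
         (delta k x * u j * sin (IZR j * x)) * (u i * sin (IZR i * x)))).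
      * rewrite lsum_plus, !lsum_scal. ring.
      * intros i _. rewrite minus_IZR.
        replace ((IZR i - IZR j) * x) with (IZR i * x - IZR j * x) by ring.
        rewrite cos_minus. ring.
Qed.

Lemma RInt_zero_pt (h : R -> R) c : 0 < c -> (forall x, continuous h x) -> (forall x, 0 <= h x) ->
  RInt h 0 c = 0 -> forall x0, 0 < x0 < c -> h x0 = 0.
Proof.
  intros Hc Hcont Hpos HI x0 Hx0.
  destruct (Req_dec (h x0) 0) as [E|E]; auto. exfalso.
  assert (Hh : 0 < h x0) by (pose proof (Hpos x0); lra).
  pose proof (Hcont x0) as C. apply continuity_pt_filterlim in C.
  destruct (C (h x0 / 2) ltac:(lra)) as [al [Hal Hc2]].
  set (r := Rmin (al / 2) (Rmin (x0 / 2) ((c - x0) / 2))).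
  assert (Hr : 0 < r) by (unfold r; repeat apply Rmin_pos; lra).
  assert (Hr1 : r <= al / 2) by apply Rmin_l.
  assert (Hr2 : r <= x0 / 2) by (eapply Rle_trans; [apply Rmin_r|apply Rmin_l]).
  assert (Hr3 : r <= (c - x0) / 2) by (eapply Rle_trans; [apply Rmin_r|apply Rmin_r]).
  assert (Ex : forall a b, ex_RInt h a b).
  { intros a b. apply (ex_RInt_continuous (V := R_CompleteNormedModule)). intros; auto. }
  assert (E1 : RInt h 0 c = RInt h 0 (x0 - r) + (RInt h (x0 - r) (x0 + r) + RInt h (x0 + r) c)).
  { rewrite <- (RInt_Chasles (V := R_CompleteNormedModule) h 0 (x0 - r) c) by auto.
    rewrite <- (RInt_Chasles (V := R_CompleteNormedModule) h (x0 - r) (x0 + r) c) by auto.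
    reflexivity. }
  assert (G1 : 0 <= RInt h 0 (x0 - r)) by (apply RInt_ge_0; auto; lra).
  assert (G3 : 0 <= RInt h (x0 + r) c) by (apply RInt_ge_0; auto; lra).
  assert (G2 : 0 < RInt h (x0 - r) (x0 + r)).
  { apply RInt_gt_0; [lra| |intros; auto].
    intros y Hy. destruct (Req_dec y x0) as [->|Nyx]; auto.
    assert (Hd : dist R_met y x0 < al) by (simpl; unfold R_dist; apply Rabs_def1; lra).
    specialize (Hc2 y (conj (conj I (not_eq_sym Nyx)) Hd)). simpl in Hc2. unfold R_dist in Hc2.
    apply Rabs_def2 in Hc2. lra. }
  lra.
Qed.

Lemma Icos m : RInt (fun x => cos (IZR m * x)) 0 PI = if Z.eq_dec m 0 then PI else 0.
Proof.
  destruct (Z.eq_dec m 0) as [->|Hm].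
  - rewrite (RInt_ext _ (fun _ => 1)). rewrite (RInt_const (V := R_CompleteNormedModule)).
    change ((PI - 0) * 1 = PI). ring.
    intros x _. toR. rewrite Rmult_0_l. apply cos_0.
  - apply (is_RInt_unique (V := R_CompleteNormedModule)).
    assert (Hm' : IZR m <> 0) by (apply not_0_IZR; auto).
    set (F := fun x => sin (IZR m * x) / IZR m).
    assert (E : minus (F PI) (F 0) = 0).
    { unfold F. rewrite Rmult_0_r, sin_0. rewrite sin_eq_0_1 by (exists m; auto).
      unfold minus, plus, opp; simpl. field; auto. }
    assert (HD : is_RInt (fun x => cos (IZR m * x)) 0 PI (minus (F PI) (F 0))).
    { apply (is_RInt_derive (V := R_CompleteNormedModule) F).
      - intros x _. unfold F. auto_derive; auto. field; auto.
      - intros x _. apply cont_R. auto_derive; auto. }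
    rewrite E in HD. exact HD.
Qed.

Lemma pos_nuk n k u : 0 <= k -> Bf n (nuk k) u u = 0 -> forall j, In j (zrange n) -> u j = 0.
Proof.
  intros Hk HB j Hj. rewrite Bf_integral in HB by auto. set (W := zrange n) in *.
  set (h := fun x => delta k x * (Cs W u x ^ 2 + Ss W u x ^ 2)) in *.
  assert (HPI := PI_RGT_0).
  assert (HZ : forall x0, 0 < x0 < 2 * PI -> h x0 = 0).
  { apply RInt_zero_pt; auto; try lra.
    - intros x. apply (cont_dtrig k (fun x => Cs W u x ^ 2 + Ss W u x ^ 2)); auto.
      intros y. auto_derive; repeat split; auto using ex_derive_Cs, ex_derive_Ss.
    - intros x. unfold h. apply Rmult_le_pos. apply delta_nonneg. nra. }
  assert (CS0 : forall x, 0 < x < PI -> Cs W u x = 0 /\ Ss W u x = 0).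
  { intros x Hx. assert (Hd : 0 < delta k x) by (apply delta_pos; pose proof (sin_gt_0 x); lra).
    specialize (HZ x ltac:(lra)). unfold h in HZ.
    assert (Cs W u x ^ 2 + Ss W u x ^ 2 = 0).
    { apply Rmult_integral in HZ. destruct HZ; [lra|auto]. }
    split; nra. }
  assert (I1 : RInt (fun x => Cs W u x * cos (IZR j * x) + Ss W u x * sin (IZR j * x)) 0 PI = 0).
  { rewrite (RInt_ext _ (fun _ => 0)).
    rewrite (RInt_const (V := R_CompleteNormedModule)). change ((PI - 0) * 0 = 0). ring.
    intros x Hx. rewrite Rmin_left, Rmax_right in Hx by lra. toR.
    destruct (CS0 x Hx) as [-> ->]. ring. }
  rewrite (RInt_ext _ (fun x => lsum W (fun i => u i * cos (IZR (i - j) * x)))) in I1.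
  2:{ intros x _. toR. unfold Cs, Ss. rewrite !lsum_scal_r, <- lsum_plus.
      apply lsum_ext. intros i _. rewrite minus_IZR.
      replace ((IZR i - IZR j) * x) with (IZR i * x - IZR j * x) by ring. rewrite cos_minus. ring. }
  rewrite (RInt_lsum W (fun i x => u i * cos (IZR (i - j) * x))) in I1.
  2:{ intros i. apply (ex_RInt_continuous (V := R_CompleteNormedModule)). intros; apply cont_R; auto_derive; auto. }
  rewrite (lsum_ext _ _ (fun i => indz j i * (u i * PI))) in I1.
  2:{ intros i _. rewrite (RInt_scal (V := R_CompleteNormedModule) (fun x => cos (IZR (i - j) * x))).
      2:{ apply (ex_RInt_continuous (V := R_CompleteNormedModule)). intros; apply cont_R; auto_derive; auto. }
      rewrite Icos. change (u i * (if Z.eq_dec (i - j) 0 then PI else 0) = indz j i * (u i * PI)).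
      unfold indz. destruct (Z.eq_dec (i - j) 0), (Z.eq_dec i j); try lia; ring. }
  rewrite (lsum_ind W j (fun i => u i * PI) (NoDup_zrange n) Hj) in I1. nra.
Qed.

Lemma cmult_sum l (c : Z -> R) x y :
  Cmult (fold_right Cplus (RtoC 0) (map (fun i => Cmult (RtoC (c i)) (cis (IZR i * x))) l)) (Cconj (cis y))
  = (lsum l (fun i => c i * cos (IZR i * x - y)), lsum l (fun i => c i * sin (IZR i * x - y))).
Proof.
  induction l as [|a l IH]; simpl.
  - unfold Cmult, Cconj, RtoC, cis; simpl. f_equal; ring.
  - rewrite Cmult_plus_distr_r, IH. unfold Cplus, Cmult, Cconj, RtoC, cis; simpl.
    rewrite cos_minus, sin_minus. f_equal; ring.
Qed.

Lemma In_self n : In n (zrange n).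
Proof. apply In_zrange. lia. Qed.

Lemma inner_re k n c j : 0 <= k ->
  hk_inner k (expsumI n c) (fun x => cis (IZR j * x)) = RtoC 0 ->
  lin n (nuk k) (fun i => indz n i + c i) j = 0.
Proof.
  intros Hk H. unfold hk_inner in H.
  set (W := zrange n) in *.
  set (Re := fun x => delta k x * (cos (IZR n * x - IZR j * x) + lsum W (fun i => c i * cos (IZR i * x - IZR j * x)))).
  set (Im := fun x => delta k x * (sin (IZR n * x - IZR j * x) + lsum W (fun i => c i * sin (IZR i * x - IZR j * x)))).
  assert (Ept : forall x, scal (delta k x) (Cmult (expsumI n c x) (Cconj (cis (IZR j * x)))) = (Re x, Im x)).
  { intros x. lazymatch goal with |- ?a = ?b => change (@eq (R * R) a b) end. unfold expsumI. rewrite Cmult_plus_distr_r. fold W. rewrite cmult_sum.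
    unfold Re, Im, Cplus, Cmult, Cconj, cis; simpl.
    simpl. rewrite cos_minus, sin_minus. unfold scal; simpl. unfold prod_scal; simpl.
    unfold scal; simpl. unfold mult; simpl. f_equal; ring. }
  assert (ExRe : ex_RInt Re 0 (2 * PI)).
  { apply (ex_dtrig k (fun x => cos (IZR n * x - IZR j * x) + lsum W (fun i => c i * cos (IZR i * x - IZR j * x)))); auto.
    intros y. apply (ex_derive_plus (K := R_AbsRing) (V := R_NormedModule)). auto_derive; auto.
    apply (ex_derive_lsum W (fun i x => c i * cos (IZR i * x - IZR j * x))). intros; auto_derive; auto. }
  assert (ExIm : ex_RInt Im 0 (2 * PI)).
  { apply (ex_dtrig k (fun x => sin (IZR n * x - IZR j * x) + lsum W (fun i => c i * sin (IZR i * x - IZR j * x)))); auto.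
    intros y. apply (ex_derive_plus (K := R_AbsRing) (V := R_NormedModule)). auto_derive; auto.
    apply (ex_derive_lsum W (fun i x => c i * sin (IZR i * x - IZR j * x))). intros; auto_derive; auto. }
  rewrite (RInt_ext (V := C_R_CompleteNormedModule) _ (fun x => (Re x, Im x))) in H by (intros; apply Ept).
  assert (HR : RInt (V := C_R_CompleteNormedModule) (fun x => (Re x, Im x)) 0 (2 * PI) = (RInt Re 0 (2 * PI), RInt Im 0 (2 * PI))).
  { apply (is_RInt_unique (V := C_R_CompleteNormedModule)).
    apply (is_RInt_fct_extend_pair (U := R_NormedModule) (V := R_NormedModule) (fun x => (Re x, Im x)));
      simpl; apply (RInt_correct (V := R_CompleteNormedModule)); auto. }
  rewrite HR in H. apply (f_equal fst) in H. unfold scal in H; simpl in H. unfold prod_scal in H; simpl in H.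
  unfold scal in H; simpl in H; unfold mult in H; simpl in H.
  assert (HRe : RInt Re 0 (2 * PI) = 0).
  { assert (0 < / (2 * PI)) by (apply Rinv_0_lt_compat; pose proof PI_RGT_0; lra). nra. }
  rewrite (RInt_ext _ (fun x => 1 * (delta k x * cos (IZR (n - j) * x)) + 1 * lsum W (fun i => c i * (delta k x * cos (IZR (i - j) * x))))) in HRe.
  2:{ intros x _. toR. unfold Re. rewrite !Rmult_1_l, Rmult_plus_distr_l, lsum_distr_l. f_equal.
      - rewrite minus_IZR, Rmult_minus_distr_r. reflexivity.
      - apply lsum_ext. intros i _. rewrite minus_IZR, Rmult_minus_distr_r. ring. }
  rewrite RInt_lin2 in HRe.
  2:{ apply ex_dcos; auto. }
  2:{ apply ex_RInt_lsum. intros i. apply (ex_RInt_scal (V := R_NormedModule) (fun x => delta k x * cos (IZR (i - j) * x))).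
      apply ex_dcos; auto. }
  rewrite RInt_lsum in HRe.
  2:{ intros i. apply (ex_RInt_scal (V := R_NormedModule) (fun x => delta k x * cos (IZR (i - j) * x))).
      apply ex_dcos; auto. }
  unfold lin. fold W.
  rewrite (lsum_ext _ _ (fun i => indz n i * nuk k (i - j)%Z + c i * nuk k (i - j)%Z)) by (intros; ring).
  rewrite lsum_plus, (lsum_ind W n _ (NoDup_zrange n) (In_self n)).
  rewrite <- HRe. unfold nuk. rewrite !Rmult_1_l. f_equal. apply lsum_ext. intros i _.
  rewrite (RInt_scal (V := R_CompleteNormedModule) (fun x => delta k x * cos (IZR (i - j) * x))).
  reflexivity. apply ex_dcos; auto.
Qed.

Lemma zrange_opp n : zrange (- n) = zrange n.
Proof. unfold zrange. rewrite Z.abs_opp. replace (Z.abs_nat (- n)) with (Z.abs_nat n) by lia. reflexivity. Qed.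

Theorem mainTheorem3 (k : R) (n : Z) (En Emn : R -> R) :
  0 <= k -> (1 <= n)%Z ->
  IsHO k n En -> IsHO k (- n) Emn ->
  forall x : R, Emn x = En (- x) + k / (IZR n + k) * En x.
Proof.
  intros Hk Hn [c [Hc [HE Oc]]] [d [Hd [HEm Od]]] x.
  assert (M := main_alg n k (nuk k) c d Hn Hk (nuk_even k) (fun m => nuk_rec k m Hk)
     (fun u => pos_nuk n k u Hk) Hc Hd
     (fun j Hj => inner_re k n c j Hk (Oc j Hj))).
  assert (Od' : forall j, tri j (- n) -> lin n (nuk k) (fun i => indz (- n) i + d i) j = 0).
  { intros j Hj. pose proof (inner_re k (- n) d j Hk (Od j Hj)) as H.
    unfold lin in H |- *. rewrite zrange_opp in H. exact H. }
  specialize (M Od'). set (kap := k / (IZR n + k)) in *.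
  set (W := zrange n) in *.
  rewrite HEm, !HE. unfold expsumR. rewrite !fold_map_lsum, zrange_opp. fold W.
  assert (HnW : In n W) by apply In_self.
  assert (HmW : In (- n)%Z W) by (apply In_zrange; lia).
  transitivity (lsum W (fun j => (indz (- n) j + d j) * exp (IZR j * x))).
  { rewrite (lsum_ext _ (fun j => (indz (- n) j + d j) * exp (IZR j * x)) (fun j => indz (- n) j * exp (IZR j * x) + d j * exp (IZR j * x))) by (intros; ring).
    rewrite lsum_plus, (lsum_ind W (- n) _ (NoDup_zrange n) HmW). reflexivity. }
  rewrite (lsum_ext _ _ (fun j => (indz n (- j) + c (- j)%Z) * exp (IZR j * x) +
     kap * ((indz n j + c j) * exp (IZR j * x)))).
  2:{ intros j Hj. rewrite (M j Hj). ring. }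
  rewrite lsum_plus, lsum_scal. f_equal.
  - transitivity (lsum W (fun j => (indz n j + c j) * exp (IZR j * - x))).
    + unfold W. rewrite <- (lsum_opp n (fun j => (indz n j + c j) * exp (IZR j * - x))).
      apply lsum_ext. intros j _. rewrite opp_IZR. f_equal. f_equal. ring.
    + rewrite (lsum_ext _ (fun j => (indz n j + c j) * exp (IZR j * - x)) (fun j => indz n j * exp (IZR j * - x) + c j * exp (IZR j * - x))) by (intros; ring).
      rewrite lsum_plus, (lsum_ind W n _ (NoDup_zrange n) HnW). reflexivity.
  - f_equal.
    rewrite (lsum_ext _ (fun j => (indz n j + c j) * exp (IZR j * x)) (fun j => indz n j * exp (IZR j * x) + c j * exp (IZR j * x))) by (intros; ring).
    rewrite lsum_plus, (lsum_ind W n _ (NoDup_zrange n) HnW). reflexivity.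
Qed.
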